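(* On the line ${\rm O}x$, let ${\rm A},{\rm B}$ have abscissas $0<x_{\rm B}<x_{\rm A}$ and let $v_E=\sqrt{2/x_{\rm A}}$. For each initial velocity $v_{\rm A}\in\,]-\infty,v_E[$, the rectilinear solution of $\ddot x=-1/x^2$ with $x(t_{\rm A})=x_{\rm A}$, $\dot x(t_{\rm A})=v_{\rm A}$ reaches ${\rm B}$ before any collision with ${\rm O}$ (after culminating if $v_{\rm A}\ge0$); let $T_D^R(v_{\rm A})>0$ be the first time after $t_{\rm A}$, minus $t_{\rm A}$, at which it is at ${\rm B}$. The direct Keplerian arcs from ${\rm A}$ to ${\rm B}$ are exactly these arcs, parametrized by $v_{\rm A}\in\,]-\infty,v_E[$. The function $T_D^R$ is increasing with ${\rm d}T_D^R/{\rm d}v_{\rm A}>0$ everywhere, $T_D^R(v_{\rm A})\to0$ as $v_{\rm A}\to-\infty$ and $T_D^R(v_{\rm A})\to+\infty$ as $v_{\rm A}\to v_E^-$.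
   Context: Units are normalized so that the Kepler problem with fixed center ${\rm O}$ (origin) is $\ddot q=-q/|q|^3$; on a line through ${\rm O}$ with $x>0$ it reads $\ddot x=-1/x^2$. A Keplerian arc from ${\rm A}$ to ${\rm B}$ is a solution on a compact time interval $[t_{\rm A},t_{\rm B}]$ with $q(t_{\rm A})={\rm A}$, $q(t_{\rm B})={\rm B}$; its elapsed time is $t_{\rm B}-t_{\rm A}$. Rectilinear motions are extended after collision with ${\rm O}$ (the body bounces back along the same ray, keeping the same energy). An arc is indirect if its convex hull contains ${\rm O}$ and direct otherwise; for rectilinear arcs, direct means no collision with ${\rm O}$ occurs. *)

(* Defs.v *)
From Stdlib Require Import Reals.
Open Scope R_scope.

Definition norm2 (a b : R) : R := sqrt (a ^ 2 + b ^ 2).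

(* Derivatives are two-sided (the
   solution is given as functions on R satisfying the ODE at every
   point of [a,b]). *)
Definition kepler_sol (q1 q2 p1 p2 : R -> R) (a b : R) : Prop :=
  a <= b /\
  forall t, a <= t <= b ->
    norm2 (q1 t) (q2 t) <> 0 /\
    derivable_pt_lim q1 t (p1 t) /\
    derivable_pt_lim q2 t (p2 t) /\
    derivable_pt_lim p1 t (- q1 t / (norm2 (q1 t) (q2 t)) ^ 3) /\
    derivable_pt_lim p2 t (- q2 t / (norm2 (q1 t) (q2 t)) ^ 3).

(* (y1,y2) lies in the convex hull of the planar set S
   (finite convex combinations; sum_f_R0 f n = f 0 + ... + f n). *)
Definition in_conv_hull (S : R -> R -> Prop) (y1 y2 : R) : Prop :=
  exists (n : nat) (c1 c2 w : nat -> R),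
    (forall i, (i <= n)%nat -> S (c1 i) (c2 i) /\ 0 <= w i) /\
    sum_f_R0 w n = 1 /\
    sum_f_R0 (fun i => w i * c1 i) n = y1 /\
    sum_f_R0 (fun i => w i * c2 i) n = y2.

Definition arc_image (q1 q2 : R -> R) (a b : R) : R -> R -> Prop :=
  fun z1 z2 => exists t, a <= t <= b /\ q1 t = z1 /\ q2 t = z2.

(* A direct Keplerian arc from A=(a1,a2) to B=(b1,b2) on [tA,tB]:
   a solution (without collision) whose convex hull does not contain O.
   (Arcs with a collision are rectilinear arcs through O, hence indirect,
   so they need not be considered here.) *)
Definition direct_arc (q1 q2 p1 p2 : R -> R) (tA tB a1 a2 b1 b2 : R) : Prop :=
  kepler_sol q1 q2 p1 p2 tA tB /\
  q1 tA = a1 /\ q2 tA = a2 /\ q1 tB = b1 /\ q2 tB = b2 /\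
  ~ in_conv_hull (arc_image q1 q2 tA tB) 0 0.

Definition vE (xA : R) : R := sqrt (2 / xA).

(* Main.v *)
Require Import Defs.
From Stdlib Require Import Reals Lra Psatz Lia.
From Stdlib Require Import IndefiniteDescription Classical Ranalysis5.
From Coquelicot Require Import Coquelicot.
Open Scope R_scope.

Lemma mvt_const (f : R -> R) a b : a <= b ->
  (forall t, a <= t <= b -> derivable_pt_lim f t 0) -> f b = f a.
Proof.
  intros Hab Hd. destruct (Rle_lt_or_eq_dec a b Hab) as [Hlt|Heq]; [|subst; reflexivity].
  destruct (MVT_cor2 f (fun _ => 0) a b Hlt Hd) as [c [Hc _]]. lra.
Qed.

Lemma mvt_incr (f f' : R -> R) a b :
  (forall t, a <= t <= b -> derivable_pt_lim f t (f' t)) ->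
  (forall t, a <= t <= b -> 0 < f' t) ->
  forall s t, a <= s -> s < t -> t <= b -> f s < f t.
Proof.
  intros Hd Hp s t H1 H2 H3.
  destruct (MVT_cor2 f f' s t H2 (fun c Hc => Hd c ltac:(lra))) as [c [Hc Hc']].
  assert (0 < f' c) by (apply Hp; lra). nra.
Qed.

Lemma mvt_decr (f f' : R -> R) a b :
  (forall t, a <= t <= b -> derivable_pt_lim f t (f' t)) ->
  (forall t, a <= t <= b -> f' t < 0) ->
  forall s t, a <= s -> s < t -> t <= b -> f t < f s.
Proof.
  intros Hd Hp s t H1 H2 H3.
  destruct (MVT_cor2 f f' s t H2 (fun c Hc => Hd c ltac:(lra))) as [c [Hc Hc']].
  assert (f' c < 0) by (apply Hp; lra). nra.
Qed.

Lemma dl_cont f t l : derivable_pt_lim f t l -> continuity_pt f t.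
Proof. intro H. apply derivable_continuous_pt. exists l; exact H. Qed.

Lemma dl_ext_loc f g x l d : 0 < d -> (forall y, Rabs (y - x) < d -> f y = g y) ->
  derivable_pt_lim f x l -> derivable_pt_lim g x l.
Proof.
  intros Hd Hfg H eps Heps. destruct (H eps Heps) as [d0 Hd0].
  assert (Hm : 0 < Rmin d0 d) by (apply Rmin_pos; [apply cond_pos|lra]).
  exists (mkposreal _ Hm). intros h Hh0 Hh. simpl in Hh.
  rewrite <- (Hfg (x+h)), <- (Hfg x).
  - apply Hd0; auto. apply Rlt_le_trans with (1 := Hh). apply Rmin_l.
  - rewrite Rminus_eq_0, Rabs_R0; lra.
  - replace (x + h - x) with h by ring. apply Rlt_le_trans with (1 := Hh). apply Rmin_r.
Qed.

Lemma inv_fun (f f' : R -> R) lb ub :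
  lb < ub ->
  (forall s, lb <= s <= ub -> derivable_pt_lim f s (f' s)) ->
  (forall s, lb <= s <= ub -> 0 < f' s) ->
  exists g, (forall y, f lb <= y <= f ub -> lb <= g y <= ub /\ f (g y) = y) /\
     (forall y, f lb < y < f ub -> derivable_pt_lim g y (/ f' (g y))).
Proof.
  intros Hlu Hd Hp.
  assert (Hincr : forall x y, lb <= x -> x < y -> y <= ub -> f x < f y)
    by (intros; eapply mvt_incr; eauto).
  assert (Hcont : forall a, lb <= a <= ub -> continuity_pt f a)
    by (intros a Ha; exact (dl_cont _ _ _ (Hd a Ha))).
  assert (Hex : forall y, exists x, f lb <= y <= f ub -> lb <= x <= ub /\ f x = y).
  { intro y. destruct (classic (f lb <= y <= f ub)) as [Hy|Hy].
    - destruct (f_interv_is_interv f lb ub y Hlu Hy Hcont) as [x Hx]. exists x; auto.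
    - exists lb; tauto. }
  set (g := fun y => proj1_sig (constructive_indefinite_description _ (Hex y))).
  assert (Hg : forall y, f lb <= y <= f ub -> lb <= g y <= ub /\ f (g y) = y).
  { intro y. unfold g. destruct (constructive_indefinite_description _ (Hex y)). simpl. auto. }
  exists g. split; [exact Hg|].
  assert (Hinj : forall x y, lb <= x <= ub -> lb <= y <= ub -> f x = f y -> x = y).
  { intros x y Hx Hy Hxy. destruct (Rtotal_order x y) as [H|[H|H]]; auto.
    - pose proof (Hincr x y ltac:(lra) H ltac:(lra)). lra.
    - pose proof (Hincr y x ltac:(lra) H ltac:(lra)). lra. }
  assert (Hfl : f lb <= f ub) by (left; apply Hincr; lra).
  assert (Hglb : g (f lb) = lb).
  { destruct (Hg (f lb)) as [H1 H2]; [lra|]. apply Hinj; auto; lra. }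
  assert (Hgub : g (f ub) = ub).
  { destruct (Hg (f ub)) as [H1 H2]; [lra|]. apply Hinj; auto; lra. }
  intros y Hy.
  assert (Prf : forall a, g (f lb) <= a <= g (f ub) -> derivable_pt f a).
  { intros a Ha. rewrite Hglb, Hgub in Ha. exists (f' a). apply Hd; lra. }
  assert (Hgc : continuity_pt g y).
  { apply (continuity_pt_recip_interv f g lb ub Hlu Hincr).
    - intros x H1 H2. unfold comp, id. apply Hg; lra.
    - intros x H1 H2. apply Hg; lra.
    - exact Hcont.
    - exact Hy. }
  assert (Hgy : g (f lb) <= g y <= g (f ub)).
  { rewrite Hglb, Hgub. apply Hg; lra. }
  assert (Hgy2 : lb <= g y <= ub) by (apply Hg; lra).
  assert (Hval : derive_pt f (g y) (Prf (g y) Hgy) = f' (g y)).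
  { apply derive_pt_eq_0. apply Hd; auto. }
  assert (Hpos := Hp (g y) Hgy2).
  pose proof (derivable_pt_lim_recip_interv f g (f lb) (f ub) y Prf Hgc
    ltac:(lra) Hy Hgy) as HH.
  rewrite Hval in HH.
  replace (/ f' (g y)) with (1 / f' (g y)) by (field; lra).
  apply HH.
  - intros x Hx. unfold comp, id. apply Hg; lra.
  - lra.
Qed.

Lemma dl_eq f t l l' : derivable_pt_lim f t l -> l = l' -> derivable_pt_lim f t l'.
Proof. intros H ->; exact H. Qed.
Lemma dl_comp' (f g : R -> R) t l1 l2 : derivable_pt_lim f t l1 ->
  derivable_pt_lim g (f t) l2 -> derivable_pt_lim (fun s => g (f s)) t (l2 * l1).
Proof. intros; apply (derivable_pt_lim_comp f g); auto. Qed.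
Lemma dl_mult' f g t l1 l2 : derivable_pt_lim f t l1 -> derivable_pt_lim g t l2 ->
  derivable_pt_lim (fun s => f s * g s) t (l1 * g t + f t * l2).
Proof. intros; apply (derivable_pt_lim_mult f g); auto. Qed.
Lemma dl_plus' f g t l1 l2 : derivable_pt_lim f t l1 -> derivable_pt_lim g t l2 ->
  derivable_pt_lim (fun s => f s + g s) t (l1 + l2).
Proof. intros; apply (derivable_pt_lim_plus f g); auto. Qed.
Lemma dl_minus' f g t l1 l2 : derivable_pt_lim f t l1 -> derivable_pt_lim g t l2 ->
  derivable_pt_lim (fun s => f s - g s) t (l1 - l2).
Proof. intros; apply (derivable_pt_lim_minus f g); auto. Qed.
Lemma dl_const' c t : derivable_pt_lim (fun _ => c) t 0.
Proof. apply (derivable_pt_lim_const c). Qed.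
Lemma dl_id' t : derivable_pt_lim (fun s => s) t 1.
Proof. apply derivable_pt_lim_id. Qed.
Lemma dl_scal' c f t l : derivable_pt_lim f t l -> derivable_pt_lim (fun s => c * f s) t (c * l).
Proof. intros. apply (derivable_pt_lim_scal f c); auto. Qed.
Lemma dl_inv' f t l : derivable_pt_lim f t l -> f t <> 0 ->
  derivable_pt_lim (fun s => / f s) t (- l / (f t * f t)).
Proof.
  intros H Hn. apply is_derive_Reals. apply is_derive_Reals in H.
  eapply is_derive_ext; [intro; reflexivity|].
  replace (- l / (f t * f t)) with (- l / f t ^ 2) by (simpl; field; auto).
  apply is_derive_inv; auto.
Qed.
Lemma dl_sqrt' f t l : derivable_pt_lim f t l -> 0 < f t ->
  derivable_pt_lim (fun s => sqrt (f s)) t (l / (2 * sqrt (f t))).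
Proof.
  intros H Hp. eapply dl_eq. apply dl_comp'; [exact H| apply derivable_pt_lim_sqrt; auto].
  pose proof (sqrt_lt_R0 _ Hp). field. lra.
Qed.

Definition rsol (x v : R -> R) (t0 t1 : R) : Prop :=
  forall t, t0 <= t <= t1 -> 0 < x t /\ derivable_pt_lim x t (v t) /\
     derivable_pt_lim v t (- / (x t * x t)).

Lemma rsol_sub x v a b c d : rsol x v a b -> a <= c -> d <= b -> rsol x v c d.
Proof. intros H H1 H2 t Ht. apply H. lra. Qed.

Lemma energy x v a b : rsol x v a b -> forall t, a <= t <= b ->
  v t * v t - 2 / x t = v a * v a - 2 / x a.
Proof.
  intros H t Ht.
  apply (mvt_const (fun t => v t * v t - 2 / x t) a t); [lra|].
  intros s Hs. destruct (H s ltac:(lra)) as [Hx [Hdx Hdv]].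
  unfold Rdiv. eapply dl_eq.
  - apply dl_minus'. apply dl_mult'; eauto.
    apply (dl_scal' 2 (fun s => / x s)). apply dl_inv'; eauto. lra.
  - field. lra.
Qed.

Lemma vE_pos xA : 0 < xA -> 0 < vE xA.
Proof. intro. unfold vE. apply sqrt_lt_R0. apply Rdiv_lt_0_compat; lra. Qed.

Lemma vE_sq xA : 0 < xA -> vE xA * vE xA = 2 / xA.
Proof. intro. unfold vE. apply sqrt_sqrt. left. apply Rdiv_lt_0_compat; lra. Qed.

Lemma lt_vE_sq xA u : 0 < xA -> 0 <= u -> u < vE xA -> u * u < 2 / xA.
Proof. intros H1 H2 H3. rewrite <- vE_sq by auto. nra. Qed.

Lemma sq_lt_vE xA u : 0 < xA -> u * u < 2 / xA -> u < vE xA.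
Proof. intros H1 H2. rewrite <- vE_sq in H2 by auto. pose proof (vE_pos xA H1). nra. Qed.

Lemma rsol_main x v tA tB xA xB : 0 < xB -> xB < xA -> rsol x v tA tB -> tA <= tB ->
  x tA = xA -> x tB = xB ->
  tA < tB /\ v tA < vE xA /\ v tB < 0 /\
  (forall t, tA <= t <= tB -> v tB <= v t <= v tA).
Proof.
  intros HB HBA Hs Hab HxA HxB.
  assert (Hlt : tA < tB).
  { destruct (Rle_lt_or_eq_dec _ _ Hab) as [H|H]; auto. subst. lra. }
  assert (Hdecr : forall s t, tA <= s -> s < t -> t <= tB -> v t < v s).
  { apply (mvt_decr v (fun t => - / (x t * x t)) tA tB).
    - intros t Ht. apply Hs; auto.
    - intros t Ht. destruct (Hs t Ht) as [Hx _].
      assert (0 < / (x t * x t)) by (apply Rinv_0_lt_compat; nra). lra. }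
  destruct (MVT_cor2 x v tA tB Hlt (fun c Hc => proj1 (proj2 (Hs c Hc)))) as [c [Hc Hc']].
  assert (Hvc : v c < 0).
  { rewrite HxA, HxB in Hc. destruct (Rle_lt_dec 0 (v c)); auto. nra. }
  assert (HvB : v tB < 0) by (pose proof (Hdecr c tB ltac:(lra) ltac:(lra) ltac:(lra)); lra).
  split; [auto|]. split; [|split; [auto|]].
  - destruct (Rlt_le_dec (v tA) (vE xA)) as [H|H]; auto. exfalso.
    pose proof (vE_pos xA ltac:(lra)) as Hve.
    destruct (IVT_interv (fun t => - v t) tA c) as [z [Hz Hz']].
    + intros a Ha. apply continuity_pt_opp. apply (dl_cont _ _ _ (proj2 (proj2 (Hs a ltac:(lra))))).
    + lra.
    + lra.
    + lra.
    + pose proof (energy x v tA tB Hs z ltac:(lra)) as He.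
      destruct (Hs z ltac:(lra)) as [Hxz _].
      assert (v tA * v tA >= 2 / xA).
      { rewrite <- vE_sq by lra. nra. }
      assert (0 < 2 / x z) by (apply Rdiv_lt_0_compat; lra).
      rewrite HxA in He. assert (Hvz : v z = 0) by lra. rewrite Hvz in He. lra.
  - intros t Ht. split.
    + destruct (Rle_lt_or_eq_dec t tB ltac:(lra)) as [H|H]; [|subst; lra].
      left. apply Hdecr; lra.
    + destruct (Rle_lt_or_eq_dec tA t ltac:(lra)) as [H|H]; [|subst; lra].
      left. apply Hdecr; lra.
Qed.

Lemma locally_R (x : R) (P : R -> Prop) (e : R) : 0 < e ->
  (forall y, Rabs (y - x) < e -> P y) -> locally x P.
Proof. intros He H. exists (mkposreal e He). intros y Hy. apply H. exact Hy. Qed.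

Lemma sq_pos u : u <> 0 -> 0 < u * u.
Proof. intro H. pose proof (Rsqr_pos_lt u H). unfold Rsqr in *. lra. Qed.

Definition rad (xA u s : R) := u * u - 2 / s - 2 / xA.
Definition kf (xA u s : R) := / sqrt (rad xA u s).
Definition Phi (xA u s : R) : R := RInt (kf xA u) (- xA) s.
Definition Ti (xA xB u : R) : R := Phi xA u (- xB).
Definition dlt (xA u : R) := Rmin xA (u * u * xA * xA / 4).

Lemma dlt_pos xA u : 0 < xA -> u <> 0 -> 0 < dlt xA u.
Proof.
  intros H1 H2. unfold dlt. apply Rmin_pos; auto.
  assert (0 < u * u) by (apply sq_pos; auto). 
  apply Rdiv_lt_0_compat; [|lra]. apply Rmult_lt_0_compat; [apply Rmult_lt_0_compat|]; lra.
Qed.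

Lemma rad_pos xA u s : 0 < xA -> u <> 0 -> - xA - dlt xA u < s < 0 -> 0 < rad xA u s.
Proof.
  intros H1 H2 Hs. unfold rad.
  assert (Huu : 0 < u * u) by (apply sq_pos; auto).
  set (p := - s). assert (Hp : 0 < p) by (unfold p; lra).
  replace (2 / s) with (- (2 / p)) by (unfold p; field; lra).
  set (q := 2 / p - 2 / xA).
  assert (Hq : q * p * xA = 2 * (xA - p)) by (unfold q; field; lra).
  assert (Hd1 : dlt xA u <= xA) by apply Rmin_l.
  assert (Hd2 : dlt xA u <= u * u * xA * xA / 4) by apply Rmin_r.
  assert (p < xA + dlt xA u) by (unfold p; lra).
  replace (u * u - - (2 / p) - 2 / xA) with (u * u + q) by (unfold q; ring).
  assert (Hpx : 0 < p * xA) by (apply Rmult_lt_0_compat; lra).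
  assert (Hq' : q * (p * xA) = 2 * (xA - p)) by (rewrite <- Hq; ring).
  assert (Huu' : 0 < u * u) by (apply sq_pos; auto).
  destruct (Rle_lt_dec p xA).
  - assert (0 <= q).
    { destruct (Rle_lt_dec 0 q); auto. nra. }
    lra.
  - assert (- (u * u) / 2 < q).
    { destruct (Rlt_le_dec (- (u * u) / 2) q); auto.
      assert (q * (p * xA) <= - (u * u) / 2 * (p * xA)) by (apply Rmult_le_compat_r; lra).
      assert (u * u * (xA * xA) < u * u * (p * xA)) by (apply Rmult_lt_compat_l; nra).
      nra. }
    lra.
Qed.

Lemma rad_dl xA u s : s <> 0 -> derivable_pt_lim (rad xA u) s (2 / (s * s)).
Proof.
  intros Hs. unfold rad. eapply dl_eq.
  - apply dl_minus'; [apply dl_minus'; [apply dl_const'|] | apply dl_const'].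
    unfold Rdiv. apply dl_scal'. apply dl_inv'; [apply dl_id'|auto].
  - cbv beta. field. auto.
Qed.

Lemma kf_dl xA u s : s <> 0 -> 0 < rad xA u s ->
  derivable_pt_lim (kf xA u) s (- (2 / (s * s) / (2 * sqrt (rad xA u s))) /
     (sqrt (rad xA u s) * sqrt (rad xA u s))).
Proof.
  intros Hs Hr. unfold kf. apply (dl_inv' (fun s => sqrt (rad xA u s))).
  - apply (dl_sqrt' (rad xA u)); auto. apply rad_dl; auto.
  - pose proof (sqrt_lt_R0 _ Hr). lra.
Qed.

Lemma kf_cont xA u s : 0 < xA -> u <> 0 -> - xA - dlt xA u < s < 0 ->
  continuous (kf xA u) s.
Proof.
  intros H1 H2 Hs. apply continuity_pt_filterlim.
  eapply dl_cont. apply kf_dl; [lra|]. apply rad_pos; auto.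
Qed.

Lemma kf_pos xA u s : 0 < xA -> u <> 0 -> - xA - dlt xA u < s < 0 -> 0 < kf xA u s.
Proof.
  intros. unfold kf. apply Rinv_0_lt_compat. apply sqrt_lt_R0. apply rad_pos; auto.
Qed.

Lemma kf_exRInt xA u a b : 0 < xA -> u <> 0 -> - xA - dlt xA u < a < 0 ->
  - xA - dlt xA u < b < 0 -> ex_RInt (kf xA u) a b.
Proof.
  intros. apply (ex_RInt_continuous (V:=R_CompleteNormedModule)). intros z Hz. apply kf_cont; auto.
  split.
  - apply Rlt_le_trans with (2 := proj1 Hz). apply Rmin_case; lra.
  - apply Rle_lt_trans with (1 := proj2 Hz). apply Rmax_case; lra.
Qed.

Lemma Phi_dl xA u s : 0 < xA -> u <> 0 -> - xA - dlt xA u < s < 0 ->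
  derivable_pt_lim (Phi xA u) s (kf xA u s).
Proof.
  intros H1 H2 Hs. apply is_derive_Reals. unfold Phi.
  pose proof (dlt_pos xA u H1 H2).
  apply (is_derive_RInt (V:=R_NormedModule) (kf xA u) (fun s => RInt (kf xA u) (- xA) s) (- xA) s).
  - apply locally_R with (e := Rmin (s + xA + dlt xA u) (- s) / 2).
    + apply Rdiv_lt_0_compat; [apply Rmin_pos|]; lra.
    + intros y Hy. apply (RInt_correct (V:=R_CompleteNormedModule)). apply kf_exRInt; auto; [lra|].
      assert (Rmin (s + xA + dlt xA u) (- s) <= s + xA + dlt xA u) by apply Rmin_l.
      assert (Rmin (s + xA + dlt xA u) (- s) <= - s) by apply Rmin_r.
      assert (0 < Rmin (s + xA + dlt xA u) (- s)) by (apply Rmin_pos; lra).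
      apply Rabs_def2 in Hy. lra.
  - apply kf_cont; auto.
Qed.

Lemma Phi_0 xA u : Phi xA u (- xA) = 0.
Proof. unfold Phi. rewrite RInt_point. reflexivity. Qed.

Lemma Phi_incr xA u : 0 < xA -> u <> 0 -> forall s t,
  - xA - dlt xA u < s -> s < t -> t < 0 -> Phi xA u s < Phi xA u t.
Proof.
  intros H1 H2 s t Hs Hst Ht.
  apply (mvt_incr (Phi xA u) (kf xA u) s t); try lra.
  - intros; apply Phi_dl; auto; lra.
  - intros; apply kf_pos; auto; lra.
Qed.

Lemma time_in x v tA tB xA xB : 0 < xB -> xB < xA -> rsol x v tA tB -> tA <= tB ->
  x tA = xA -> x tB = xB -> v tA < 0 -> tB - tA = Ti xA xB (v tA).
Proof.
  intros HB HBA Hs Hab HxA HxB Hu.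
  set (u := v tA) in *.
  assert (Hu0 : u <> 0) by lra.
  destruct (rsol_main x v tA tB xA xB HB HBA Hs Hab HxA HxB) as [Hlt [_ [_ Hv]]].
  assert (Hxr : forall t, tA <= t <= tB -> xB <= x t <= xA).
  { assert (Hd : forall s t, tA <= s -> s < t -> t <= tB -> x t < x s).
    { apply (mvt_decr x v tA tB).
      - intros t Ht. apply Hs; auto.
      - intros t Ht. specialize (Hv t Ht). unfold u in *; lra. }
    intros t Ht. split.
    + destruct (Rle_lt_or_eq_dec t tB ltac:(lra)) as [H|H]; [|subst; lra].
      left. rewrite <- HxB. apply Hd; lra.
    + destruct (Rle_lt_or_eq_dec tA t ltac:(lra)) as [H|H]; [|subst; lra].
      left. rewrite <- HxA. apply Hd; lra. }
  pose proof (dlt_pos xA u ltac:(lra) Hu0) as Hdl.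
  assert (Heq : Phi xA u (- x tB) - tB = Phi xA u (- x tA) - tA).
  { apply (mvt_const (fun t => Phi xA u (- x t) - t) tA tB); [lra|].
    intros t Ht. destruct (Hs t Ht) as [Hxt [Hdx Hdv]].
    specialize (Hxr t Ht). specialize (Hv t Ht).
    assert (Hr : rad xA u (- x t) = v t * v t).
    { pose proof (energy x v tA tB Hs t Ht) as He. fold u in He. rewrite HxA in He.
      unfold rad. replace (2 / - x t) with (- (2 / x t)) by (field; lra). lra. }
    assert (Hsq : sqrt (rad xA u (- x t)) = - v t).
    { rewrite Hr. replace (v t * v t) with (Rsqr (v t)) by reflexivity.
      rewrite sqrt_Rsqr_abs. apply Rabs_left. unfold u in *; lra. }
    assert (Hox : derivable_pt_lim (fun t => - x t) t (- v t))
      by (apply (derivable_pt_lim_opp x); auto).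
    eapply dl_eq.
    - apply dl_minus'; [|apply dl_id'].
      apply (dl_comp' (fun t => - x t) (Phi xA u)); [exact Hox|].
      apply Phi_dl; [lra|auto|lra].
    - cbv beta. unfold kf. rewrite Hsq. field. unfold u in *; lra. }
  rewrite HxA, HxB, Phi_0 in Heq. unfold Ti. lra.
Qed.

Lemma construct_in tA xA xB u : 0 < xB -> xB < xA -> u < 0 ->
  exists x v T, 0 < T /\ rsol x v tA (tA + T) /\ x tA = xA /\ v tA = u /\ x (tA + T) = xB.
Proof.
  intros HB HBA Hu. assert (Hu0 : u <> 0) by lra.
  pose proof (dlt_pos xA u ltac:(lra) Hu0) as Hdl.
  set (lb := - xA - dlt xA u / 2). set (ub := - xB / 2).
  destruct (inv_fun (Phi xA u) (kf xA u) lb ub) as [g [Hg1 Hg2]].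
  - unfold lb, ub; lra.
  - intros s Hs. apply Phi_dl; unfold lb, ub in *; auto; lra.
  - intros s Hs. apply kf_pos; unfold lb, ub in *; auto; lra.
  - assert (Hinc := Phi_incr xA u ltac:(lra) Hu0).
    assert (HgP : forall s, lb <= s <= ub -> g (Phi xA u s) = s).
    { intros s Hs. destruct (Hg1 (Phi xA u s)) as [H1 H2].
      + split; (destruct (Rle_lt_or_eq_dec _ _ (proj1 Hs)) as [H|H];
                [|subst; lra]) || idtac.
        * left; apply Hinc; unfold lb, ub in *; lra.
        * destruct (Rle_lt_or_eq_dec _ _ (proj2 Hs)) as [H|H]; [|subst; lra].
          left; apply Hinc; unfold lb, ub in *; lra.
      + destruct (Rtotal_order (g (Phi xA u s)) s) as [H|[H|H]]; auto.
        * pose proof (Hinc (g (Phi xA u s)) s); unfold lb, ub in *; lra.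
        * pose proof (Hinc s (g (Phi xA u s))); unfold lb, ub in *; lra. }
    set (T := Phi xA u (- xB)).
    assert (HT : 0 < T).
    { unfold T. rewrite <- (Phi_0 xA u). apply Hinc; lra. }
    assert (Hlb : Phi xA u lb < 0).
    { rewrite <- (Phi_0 xA u). apply Hinc; unfold lb; lra. }
    assert (Hub : T < Phi xA u ub).
    { apply Hinc; unfold ub; lra. }
    assert (Hgr : forall y, 0 <= y <= T -> - xA <= g y <= - xB).
    { intros y Hy. destruct (Hg1 y) as [H1 H2]; [lra|]. split.
      - destruct (Rle_lt_dec (- xA) (g y)) as [H|H]; auto.
        pose proof (Hinc (g y) (- xA)). rewrite Phi_0 in H0. unfold lb in *; lra.
      - destruct (Rle_lt_dec (g y) (- xB)) as [H|H]; auto.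
        pose proof (Hinc (- xB) (g y)). fold T in H0. unfold ub in *; lra. }
    exists (fun t => - g (t - tA)), (fun t => - sqrt (rad xA u (g (t - tA)))), T.
    split; [auto|]. split; [|split; [|split]].
    + intros t Ht.
      assert (Hy : 0 <= t - tA <= T) by lra.
      specialize (Hgr _ Hy).
      assert (Hgd := Hg2 (t - tA) ltac:(lra)).
      assert (Hrp : 0 < rad xA u (g (t - tA))) by (apply rad_pos; auto; lra).
      assert (Hsp := sqrt_lt_R0 _ Hrp).
      assert (Hin : derivable_pt_lim (fun t => t - tA) t 1).
      { eapply dl_eq. apply dl_minus'; [apply dl_id'|apply dl_const']. ring. }
      split; [lra|split].
      * eapply dl_eq. apply (derivable_pt_lim_opp (fun t => g (t - tA))).
        apply dl_comp'; [exact Hin| exact Hgd].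
        unfold kf. cbv beta. rewrite Rinv_inv. ring.
      * eapply dl_eq. apply (derivable_pt_lim_opp (fun t => sqrt (rad xA u (g (t - tA))))).
        apply dl_sqrt'; auto. apply dl_comp'; [apply dl_comp'; [exact Hin|exact Hgd]|].
        apply rad_dl. lra.
        unfold kf. rewrite Rinv_inv. field. split; lra.
    + simpl. replace (tA - tA) with 0 by ring.
      rewrite <- (Phi_0 xA u), HgP; [ring|unfold lb, ub; lra].
    + simpl. replace (tA - tA) with 0 by ring.
      rewrite <- (Phi_0 xA u), HgP; [|unfold lb, ub; lra].
      unfold rad. replace (u * u - 2 / - xA - 2 / xA) with (Rsqr u) by (unfold Rsqr; field; lra).
      rewrite sqrt_Rsqr_abs, Rabs_left; auto; ring.
    + replace (tA + T - tA) with T by ring. unfold T.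
      rewrite HgP; [ring|unfold lb, ub; lra].
Qed.

Definition aof (xA u : R) := / (2 / xA - u * u).
Definition Ka (a x v : R) := a * sqrt a * (PI - 2 * atan (sqrt a * v)) - a * x * v.
Definition vBof (xA xB u : R) := - sqrt (u * u + 2 / xB - 2 / xA).
Definition Te (xA xB u : R) := Ka (aof xA u) xB (vBof xA xB u) - Ka (aof xA u) xA u.

Lemma aof_pos xA u : 0 < xA -> u * u < 2 / xA -> 0 < aof xA u.
Proof. intros. unfold aof. apply Rinv_0_lt_compat. lra. Qed.

Lemma Ka_dl a x v t : 0 < a -> 0 < x t -> derivable_pt_lim x t (v t) ->
  derivable_pt_lim v t (- / (x t * x t)) -> v t * v t = 2 / x t - / a ->
  derivable_pt_lim (fun t => Ka a (x t) (v t)) t 1.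
Proof.
  intros Ha Hx Hdx Hdv Hvv. unfold Ka.
  pose proof (sqrt_lt_R0 a Ha) as HS. pose proof (sqrt_sqrt a ltac:(lra)) as HSS.
  eapply dl_eq.
  - apply (dl_minus' (fun t => a * sqrt a * (PI - 2 * atan (sqrt a * v t)))
                     (fun t => a * x t * v t)).
    + apply (dl_scal' (a * sqrt a) (fun t => PI - 2 * atan (sqrt a * v t))).
      apply (dl_minus' (fun _ => PI) (fun t => 2 * atan (sqrt a * v t))); [apply dl_const'|].
      apply (dl_scal' 2 (fun t => atan (sqrt a * v t))).
      apply (dl_comp' (fun t => sqrt a * v t) atan).
      * apply (dl_scal' (sqrt a) v). exact Hdv.
      * apply derivable_pt_lim_atan.
    + apply (dl_mult' (fun t => a * x t) v); [apply (dl_scal' a x); exact Hdx | exact Hdv].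
  - cbv beta.
    replace (1 + (sqrt a * v t) ^ 2) with (2 * a / x t) by
      (replace ((sqrt a * v t) ^ 2) with ((sqrt a * sqrt a) * (v t * v t)) by ring;
       rewrite HSS, Hvv; field; lra).
    replace (a * v t * v t) with (a * (v t * v t)) by ring. rewrite Hvv.
    field_simplify_eq; [|lra].
    replace (sqrt a ^ 2) with a by (simpl; lra). ring.
Qed.

Lemma time_ell x v tA tB xA xB : 0 < xB -> xB < xA -> rsol x v tA tB -> tA <= tB ->
  x tA = xA -> x tB = xB -> v tA * v tA < 2 / xA -> tB - tA = Te xA xB (v tA).
Proof.
  intros HB HBA Hs Hab HxA HxB Hu.
  set (u := v tA) in *.
  destruct (rsol_main x v tA tB xA xB HB HBA Hs Hab HxA HxB) as [Hlt [_ [HvB _]]].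
  set (a := aof xA u). assert (Ha : 0 < a) by (apply aof_pos; lra).
  assert (Heq : Ka a (x tB) (v tB) - tB = Ka a (x tA) (v tA) - tA).
  { apply (mvt_const (fun t => Ka a (x t) (v t) - t) tA tB); [lra|].
    intros t Ht. destruct (Hs t Ht) as [Hxt [Hdx Hdv]].
    eapply dl_eq. apply (dl_minus' (fun t => Ka a (x t) (v t)) (fun t => t)).
    - apply Ka_dl; auto.
      pose proof (energy x v tA tB Hs t Ht) as H. fold u in H. rewrite HxA in H.
      unfold a, aof. rewrite Rinv_inv. lra.
    - apply dl_id'.
    - ring. }
  assert (HvBv : v tB = vBof xA xB u).
  { unfold vBof. pose proof (energy x v tA tB Hs tB ltac:(lra)) as H. fold u in H.
    rewrite HxA, HxB in H.
    replace (u * u + 2 / xB - 2 / xA) with (Rsqr (v tB)) by (unfold Rsqr; lra).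
    rewrite sqrt_Rsqr_abs, Rabs_left; auto; ring. }
  unfold Te. fold a. rewrite HxA, HxB, HvBv in Heq. fold u in Heq. lra.
Qed.

Lemma cos_lt_1 E : 0 < E < 2 * PI -> cos E < 1.
Proof.
  intros. replace E with (2 * (E/2)) by field. rewrite cos_2a_sin.
  assert (0 < sin (E/2)) by (apply sin_gt_0; lra). nra.
Qed.

Lemma inv_fun' (f f' : R -> R) lb ub :
  lb < ub ->
  (forall s, lb <= s <= ub -> derivable_pt_lim f s (f' s)) ->
  (forall s, lb <= s <= ub -> 0 < f' s) ->
  exists g, (forall y, f lb <= y <= f ub -> lb <= g y <= ub /\ f (g y) = y) /\
     (forall y, f lb < y < f ub -> derivable_pt_lim g y (/ f' (g y))) /\
     (forall s, lb <= s <= ub -> g (f s) = s) /\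
     (forall s t, lb <= s -> s < t -> t <= ub -> f s < f t).
Proof.
  intros Hlu Hd Hp.
  assert (Hinc : forall s t, lb <= s -> s < t -> t <= ub -> f s < f t)
    by (intros; eapply mvt_incr; eauto).
  destruct (inv_fun f f' lb ub Hlu Hd Hp) as [g [H1 H2]].
  exists g. split; [auto|split; [auto|split; [|auto]]].
  intros s Hs. assert (Hr : f lb <= f s <= f ub).
  { split.
    - destruct (Rle_lt_or_eq_dec _ _ (proj1 Hs)) as [H|H]; [left; apply Hinc; lra|subst; lra].
    - destruct (Rle_lt_or_eq_dec _ _ (proj2 Hs)) as [H|H]; [left; apply Hinc; lra|subst; lra]. }
  destruct (H1 _ Hr) as [H3 H4].
  destruct (Rtotal_order (g (f s)) s) as [H|[H|H]]; auto.
  - pose proof (Hinc (g (f s)) s); lra.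
  - pose proof (Hinc s (g (f s))); lra.
Qed.

Definition tau (a E : R) := a * sqrt a * (E - sin E).
Definition Xe (a E : R) := a * (1 - cos E).
Definition Ve (a E : R) := sin E * / (sqrt a * (1 - cos E)).

Lemma tau_dl a E : derivable_pt_lim (tau a) E (a * sqrt a * (1 - cos E)).
Proof.
  unfold tau. apply (dl_scal' (a * sqrt a) (fun E => E - sin E)).
  apply (dl_minus' (fun E => E) sin); [apply dl_id'|apply derivable_pt_lim_sin].
Qed.

Lemma Xe_dl a E : derivable_pt_lim (Xe a) E (a * sin E).
Proof.
  unfold Xe. eapply dl_eq. apply (dl_scal' a (fun E => 1 - cos E)).
  apply (dl_minus' (fun _ => 1) cos); [apply dl_const'|apply derivable_pt_lim_cos].
  ring.
Qed.

Lemma Ve_dl a E : 0 < a -> cos E < 1 ->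
  derivable_pt_lim (Ve a) E (- / (sqrt a * (1 - cos E))).
Proof.
  intros Ha Hc. pose proof (sqrt_lt_R0 a Ha) as Hs. unfold Ve.
  eapply dl_eq.
  - apply (dl_mult' sin (fun E => / (sqrt a * (1 - cos E)))); [apply derivable_pt_lim_sin|].
    apply (dl_inv' (fun E => sqrt a * (1 - cos E))).
    + apply (dl_scal' (sqrt a) (fun E => 1 - cos E)).
      apply (dl_minus' (fun _ => 1) cos); [apply dl_const'|apply derivable_pt_lim_cos].
    + apply Rmult_integral_contrapositive; split; lra.
  - cbv beta. pose proof (sin2_cos2 E) as H. unfold Rsqr in H.
    field_simplify_eq; [|lra].
    replace (sin E ^ 2) with (1 - cos E ^ 2) by nra. ring.
Qed.

Lemma construct_ell tA xA xB u : 0 < xB -> xB < xA -> 0 <= u -> u * u < 2 / xA ->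
  exists x v T, 0 < T /\ rsol x v tA (tA + T) /\ x tA = xA /\ v tA = u /\ x (tA + T) = xB.
Proof.
  intros HB HBA Hu Huu.
  set (a := aof xA u). assert (Ha : 0 < a) by (apply aof_pos; lra).
  pose proof (sqrt_lt_R0 a Ha) as HS. pose proof (sqrt_sqrt a ltac:(lra)) as HSS.
  assert (Hxu : xA * (u * u) < 2).
  { apply Rmult_lt_compat_l with (r := xA) in Huu; [|lra].
    replace (xA * (2 / xA)) with 2 in Huu by (field; lra). lra. }
  set (cA := xA * u * u - 1).
  assert (HcA : -1 <= cA < 1) by (unfold cA; split; nra).
  set (EA := acos cA).
  assert (HEA : 0 < EA <= PI).
  { unfold EA. destruct (acos_bound cA). split; auto.
    destruct (Rle_lt_or_eq_dec _ _ H); auto.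
    exfalso. pose proof (cos_acos cA ltac:(lra)). rewrite <- e, cos_0 in H1. lra. }
  assert (Hainv : / a = 2 / xA - u * u) by (unfold a, aof; rewrite Rinv_inv; auto).
  set (cB := 1 - xB / a).
  assert (HcB : -1 < cB < 1).
  { unfold cB. unfold Rdiv. rewrite Hainv.
    assert (0 < xB * (2 / xA - u * u)) by (apply Rmult_lt_0_compat; lra).
    assert (xB * (2 / xA - u * u) < 2).
    { assert (xB * (2 / xA - u * u) <= xB * (2 / xA)) by (apply Rmult_le_compat_l; nra).
      assert (xB * (2 / xA) < 2).
      { replace (xB * (2 / xA)) with (2 * (xB / xA)) by (field; lra).
        assert (xB / xA < 1) by (unfold Rdiv; apply (Rmult_lt_reg_r xA); [lra|]; rewrite Rmult_assoc, Rinv_l; lra). lra. }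
      lra. }
    lra. }
  set (EB := 2 * PI - acos cB).
  assert (HEB : PI < EB < 2 * PI).
  { unfold EB. pose proof (acos_bound_lt cB HcB). lra. }
  set (lb := EA / 2). set (ub := (EB + 2 * PI) / 2).
  assert (Hcos : forall E, lb <= E <= ub -> cos E < 1).
  { intros E HE. apply cos_lt_1. unfold lb, ub in HE. lra. }
  destruct (inv_fun' (tau a) (fun E => a * sqrt a * (1 - cos E)) lb ub) as [g [Hg1 [Hg2 [HgP Hinc]]]].
  - unfold lb, ub; lra.
  - intros s Hs. apply tau_dl.
  - intros s Hs. specialize (Hcos s Hs). apply Rmult_lt_0_compat; [apply Rmult_lt_0_compat|]; lra.
  - set (T := tau a EB - tau a EA).
    assert (HT : 0 < T) by (unfold T; pose proof (Hinc EA EB); unfold lb, ub in *; lra).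
    assert (Hlb : tau a lb < tau a EA) by (apply Hinc; unfold lb, ub in *; lra).
    assert (Hub : tau a EB < tau a ub) by (apply Hinc; unfold lb, ub in *; lra).
    set (c := tau a EA - tA).
    assert (Hgr : forall y, tau a EA <= y <= tau a EB -> EA <= g y <= EB).
    { intros y Hy. destruct (Hg1 y) as [H1 H2]; [lra|]. split.
      - destruct (Rle_lt_dec EA (g y)) as [H|H]; auto.
        pose proof (Hinc (g y) EA). unfold lb, ub in *; lra.
      - destruct (Rle_lt_dec (g y) EB) as [H|H]; auto.
        pose proof (Hinc EB (g y)). unfold lb, ub in *; lra. }
    exists (fun t => Xe a (g (t + c))), (fun t => Ve a (g (t + c))), T.
    split; [auto|]. split; [|split; [|split]].
    + intros t Ht.
      assert (Hy : tau a EA <= t + c <= tau a EB) by (unfold c, T in *; lra).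
      specialize (Hgr _ Hy).
      assert (Hgd := Hg2 (t + c) ltac:(lra)).
      assert (Hc1 := Hcos (g (t + c)) ltac:(unfold lb, ub in *; lra)).
      assert (Hin : derivable_pt_lim (fun t => t + c) t 1).
      { eapply dl_eq. apply (dl_plus' (fun t => t) (fun _ => c)); [apply dl_id'|apply dl_const']. ring. }
      split; [|split].
      * unfold Xe. apply Rmult_lt_0_compat; lra.
      * eapply dl_eq. apply (dl_comp' (fun t => g (t + c)) (Xe a)).
        apply (dl_comp' (fun t => t + c) g); [exact Hin|exact Hgd].
        apply Xe_dl. cbv beta. unfold Ve. field. split; lra.
      * eapply dl_eq. apply (dl_comp' (fun t => g (t + c)) (Ve a)).
        apply (dl_comp' (fun t => t + c) g); [exact Hin|exact Hgd].
        apply Ve_dl; auto. cbv beta. unfold Xe.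
        field_simplify_eq; [|split; lra].
        replace (sqrt a ^ 2) with a by (simpl; lra). ring.
    + unfold c. replace (tA + (tau a EA - tA)) with (tau a EA) by ring.
      rewrite HgP by (unfold lb, ub in *; lra).
      unfold Xe, EA. rewrite cos_acos by lra. unfold cA, a, aof. field.
      split; lra.
    + unfold c. replace (tA + (tau a EA - tA)) with (tau a EA) by ring.
      rewrite HgP by (unfold lb, ub in *; lra).
      unfold Ve, EA. rewrite cos_acos by lra. rewrite sin_acos by lra.
      assert (Hxa : a * (1 - cA) = xA) by (unfold cA, a, aof; field; split; lra).
      assert (Hq : 1 - cA² = (u * sqrt a * (1 - cA)) ^ 2).
      { unfold Rsqr. replace ((u * sqrt a * (1 - cA)) ^ 2) with (u * u * (sqrt a * sqrt a) * (1 - cA) * (1 - cA)) by ring.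
        rewrite HSS. replace (u * u * a * (1 - cA) * (1 - cA)) with (u * u * (a * (1 - cA)) * (1 - cA)) by ring.
        rewrite Hxa. unfold cA. ring. }
      rewrite Hq, sqrt_pow2.
      * field. split; lra.
      * apply Rmult_le_pos; [apply Rmult_le_pos|]; lra.
    + unfold c, T. replace (tA + (tau a EB - tau a EA) + (tau a EA - tA)) with (tau a EB) by ring.
      rewrite HgP by (unfold lb, ub in *; lra).
      unfold Xe, EB. rewrite cos_minus, cos_2PI, sin_2PI, cos_acos by lra.
      unfold cB. field. lra.
Qed.

Section TeD.
Variables xA xB : R.
Hypothesis HB : 0 < xB.
Hypothesis HBA : xB < xA.

Let A u := aof xA u.
Let S u := sqrt (A u).
Let W u := vBof xA xB u.

Lemma Te_form u : Te xA xB u =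
  2 * A u * S u * (atan (S u * u) - atan (S u * W u)) + A u * (xA * u - xB * W u).
Proof. unfold Te, Ka, S, W, A. ring. Qed.

Lemma W_neg u : W u < 0.
Proof.
  unfold W, vBof. assert (0 < u * u + 2 / xB - 2 / xA).
  { assert (2 / xA < 2 / xB).
    { unfold Rdiv. apply Rmult_lt_compat_l; [lra|]. apply Rinv_lt_contravar; nra. }
    nra. }
  pose proof (sqrt_lt_R0 _ H). lra.
Qed.

Lemma uxA u : u * u < 2 / xA -> u * u * xA < 2.
Proof.
  intro H. apply Rmult_lt_compat_r with (r := xA) in H; [|lra].
  replace (2 / xA * xA) with 2 in H by (field; lra). lra.
Qed.

Lemma A_dl u : u * u < 2 / xA -> derivable_pt_lim A u (2 * u * A u * A u).
Proof.
  intro Hu. unfold A, aof. eapply dl_eq.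
  - apply (dl_inv' (fun u => 2 / xA - u * u)); [|lra].
    apply (dl_minus' (fun _ => 2 / xA) (fun u => u * u)); [apply dl_const'|].
    apply (dl_mult' (fun u => u) (fun u => u)); apply dl_id'.
  - cbv beta. pose proof (uxA u Hu). field. repeat split; lra.
Qed.

Lemma S_dl u : u * u < 2 / xA -> derivable_pt_lim S u (u * A u * S u).
Proof.
  intro Hu. assert (Ha : 0 < A u) by (apply aof_pos; lra).
  pose proof (sqrt_lt_R0 _ Ha) as HS. pose proof (sqrt_sqrt (A u) ltac:(lra)) as HSS.
  unfold S. eapply dl_eq. apply (dl_sqrt' A); [apply A_dl; auto|auto].
  field_simplify_eq; [|lra]. replace (sqrt (A u) ^ 2) with (A u) by (simpl; lra). ring.
Qed.

Lemma W_dl u : derivable_pt_lim W u (u / W u).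
Proof.
  pose proof (W_neg u) as Hw. unfold W in *. unfold vBof in *.
  assert (Hr : 0 < u * u + 2 / xB - 2 / xA).
  { destruct (Rlt_le_dec 0 (u * u + 2 / xB - 2 / xA)); auto.
    exfalso. rewrite sqrt_neg_0 in Hw; lra. }
  eapply dl_eq.
  - apply (derivable_pt_lim_opp (fun u => sqrt (u * u + 2 / xB - 2 / xA))).
    apply (dl_sqrt' (fun u => u * u + 2 / xB - 2 / xA)); auto.
    apply (dl_minus' (fun u => u * u + 2 / xB) (fun _ => 2 / xA)); [|apply dl_const'].
    apply (dl_plus' (fun u => u * u) (fun _ => 2 / xB)); [|apply dl_const'].
    apply (dl_mult' (fun u => u) (fun u => u)); apply dl_id'.
  - cbv beta. field. lra.
Qed.

Lemma at1_dl u : u * u < 2 / xA -> derivable_pt_lim (fun u => atan (S u * u)) u (S u).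
Proof.
  intro Hu. assert (Ha : 0 < A u) by (apply aof_pos; lra).
  pose proof (sqrt_lt_R0 _ Ha) as HS. pose proof (sqrt_sqrt (A u) ltac:(lra)) as HSS.
  eapply dl_eq.
  - apply (dl_comp' (fun u => S u * u) atan); [|apply derivable_pt_lim_atan].
    apply (dl_mult' S (fun u => u)); [apply S_dl; auto|apply dl_id'].
  - assert (HSS' : S u * S u = A u) by exact HSS.
    replace ((S u * u) ^ 2) with (A u * (u * u)) by
      (replace ((S u * u) ^ 2) with (S u * S u * (u * u)) by ring; rewrite HSS'; ring).
    assert (0 <= A u * (u * u)) by (apply Rmult_le_pos; nra).
    field. lra.
Qed.

Lemma at2_dl u : u * u < 2 / xA -> derivable_pt_lim (fun u => atan (S u * W u)) u (u * S u / W u).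
Proof.
  intro Hu. assert (Ha : 0 < A u) by (apply aof_pos; lra).
  pose proof (sqrt_lt_R0 _ Ha) as HS. pose proof (sqrt_sqrt (A u) ltac:(lra)) as HSS.
  pose proof (W_neg u) as Hw.
  eapply dl_eq.
  - apply (dl_comp' (fun u => S u * W u) atan); [|apply derivable_pt_lim_atan].
    apply (dl_mult' S W); [apply S_dl; auto|apply W_dl].
  - assert (HSS' : S u * S u = A u) by exact HSS.
    replace ((S u * W u) ^ 2) with (A u * (W u * W u)) by
      (replace ((S u * W u) ^ 2) with (S u * S u * (W u * W u)) by ring; rewrite HSS'; ring).
    assert (0 <= A u * (W u * W u)) by (apply Rmult_le_pos; nra).
    field. split; lra.
Qed.

Definition Dte u :=
  ((2 * (2 * u * A u * A u) * S u + 2 * A u * (u * A u * S u)) *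
     (atan (S u * u) - atan (S u * W u)) + 2 * A u * S u * (S u - u * S u / W u)) +
  (2 * u * A u * A u * (xA * u - xB * W u) + A u * (xA * 1 - xB * (u / W u))).

Lemma Te_dl u : u * u < 2 / xA -> derivable_pt_lim (Te xA xB) u (Dte u).
Proof.
  intro Hu.
  apply (dl_ext_loc (fun u => 2 * A u * S u * (atan (S u * u) - atan (S u * W u)) +
                               A u * (xA * u - xB * W u)) _ _ _ 1); [lra| intros; symmetry; apply Te_form|].
  unfold Dte.
  apply (dl_plus' (fun u => 2 * A u * S u * (atan (S u * u) - atan (S u * W u)))
                  (fun u => A u * (xA * u - xB * W u))).
  - apply (dl_mult' (fun u => 2 * A u * S u) (fun u => atan (S u * u) - atan (S u * W u))).
    + apply (dl_mult' (fun u => 2 * A u) S); [apply (dl_scal' 2 A); apply A_dl; auto|apply S_dl; auto].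
    + apply (dl_minus' (fun u => atan (S u * u)) (fun u => atan (S u * W u)));
        [apply at1_dl|apply at2_dl]; auto.
  - apply (dl_mult' A (fun u => xA * u - xB * W u)); [apply A_dl; auto|].
    apply (dl_minus' (fun u => xA * u) (fun u => xB * W u));
      [apply (dl_scal' xA (fun u => u)); apply dl_id'|apply (dl_scal' xB W); apply W_dl].
Qed.

Lemma Dte_pos u : 0 <= u -> u * u < 2 / xA -> 0 < Dte u.
Proof.
  intros Hu0 Hu. assert (Ha : 0 < A u) by (apply aof_pos; lra).
  pose proof (sqrt_lt_R0 _ Ha) as HS. fold (S u) in HS.
  pose proof (W_neg u) as Hw.
  assert (Hat : 0 < atan (S u * u) - atan (S u * W u)).
  { assert (S u * W u < S u * u) by (apply Rmult_lt_compat_l; lra).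
    pose proof (atan_increasing _ _ H). lra. }
  assert (Huw : 0 <= - u / W u).
  { unfold Rdiv. rewrite <- Ropp_mult_distr_l. rewrite Ropp_mult_distr_r.
    apply Rmult_le_pos; auto. rewrite <- Rinv_opp. left. apply Rinv_0_lt_compat. lra. }
  unfold Dte.
  assert (H1 : 0 <= (2 * (2 * u * A u * A u) * S u + 2 * A u * (u * A u * S u)) *
     (atan (S u * u) - atan (S u * W u))).
  { apply Rmult_le_pos; [|lra].
    assert (0 <= u * A u) by (apply Rmult_le_pos; lra).
    assert (0 <= u * A u * A u) by (apply Rmult_le_pos; lra).
    assert (0 <= u * A u * A u * S u) by (apply Rmult_le_pos; lra).
    nra. }
  assert (H2 : 0 < 2 * A u * S u * (S u - u * S u / W u)).
  { replace (S u - u * S u / W u) with (S u * (1 + - u / W u)) by (field; lra).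
    assert (0 < S u * (1 + - u / W u)) by (apply Rmult_lt_0_compat; lra).
    assert (0 < 2 * A u * S u) by (apply Rmult_lt_0_compat; [apply Rmult_lt_0_compat|]; lra).
    apply Rmult_lt_0_compat; lra. }
  assert (H3 : 0 <= 2 * u * A u * A u * (xA * u - xB * W u)).
  { apply Rmult_le_pos.
    - assert (0 <= u * A u) by (apply Rmult_le_pos; lra). nra.
    - assert (0 <= xA * u) by (apply Rmult_le_pos; lra). nra. }
  assert (H4 : 0 < A u * (xA * 1 - xB * (u / W u))).
  { apply Rmult_lt_0_compat; auto.
    replace (xB * (u / W u)) with (- (xB * (- u / W u))) by (field; lra).
    assert (0 <= xB * (- u / W u)) by (apply Rmult_le_pos; lra). lra. }
  lra.
Qed.

Lemma Te_ge u : 0 <= u -> u * u < 2 / xA -> A u * xA * u <= Te xA xB u.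
Proof.
  intros Hu0 Hu. assert (Ha : 0 < A u) by (apply aof_pos; lra).
  pose proof (sqrt_lt_R0 _ Ha) as HS. fold (S u) in HS.
  pose proof (W_neg u) as Hw. rewrite Te_form.
  assert (Hat : 0 < atan (S u * u) - atan (S u * W u)).
  { assert (S u * W u < S u * u) by (apply Rmult_lt_compat_l; lra).
    pose proof (atan_increasing _ _ H). lra. }
  assert (0 <= 2 * A u * S u * (atan (S u * u) - atan (S u * W u))).
  { apply Rmult_le_pos; [|lra]. apply Rmult_le_pos; [|lra]. lra. }
  assert (0 <= A u * (- xB * W u)) by (apply Rmult_le_pos; nra).
  nra.
Qed.

End TeD.

Definition dkf xA u s := - u / (rad xA u s * sqrt (rad xA u s)).

Lemma kf_dlu xA u s : s <> 0 -> 0 < rad xA u s ->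
  derivable_pt_lim (fun u => kf xA u s) u (dkf xA u s).
Proof.
  intros Hs Hr. pose proof (sqrt_lt_R0 _ Hr) as HS. pose proof (sqrt_sqrt _ (Rlt_le _ _ Hr)) as HSS.
  unfold kf, dkf. eapply dl_eq.
  - apply (dl_inv' (fun u => sqrt (rad xA u s))); [|lra].
    apply (dl_sqrt' (fun u => rad xA u s)); auto.
    unfold rad. apply (dl_minus' (fun u => u * u - 2 / s) (fun _ => 2 / xA)); [|apply dl_const'].
    apply (dl_minus' (fun u => u * u) (fun _ => 2 / s)); [|apply dl_const'].
    apply (dl_mult' (fun u => u) (fun u => u)); apply dl_id'.
  - cbv beta. rewrite HSS. field. lra.
Qed.

Lemma cont2d_slice f x y : continuity_2d_pt f x y -> continuous (fun v => f x v) y.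
Proof.
  intro H. apply continuity_pt_filterlim. intros eps Heps.
  destruct (H (mkposreal eps Heps)) as [d Hd].
  exists d. split; [apply cond_pos|]. intros z [_ Hz]. simpl in Hz. unfold R_dist in Hz.
  simpl. unfold R_dist.
  apply (Hd x z); [rewrite Rminus_eq_0, Rabs_R0; apply cond_pos|exact Hz].
Qed.

Lemma dkf_cont2 xA u v : 0 < rad xA u v -> v <> 0 -> continuity_2d_pt (dkf xA) u v.
Proof.
  intros Hr Hv.
  assert (Hc : continuity_2d_pt (fun u v => u * u - 2 * / v - 2 / xA) u v).
  { apply continuity_2d_pt_minus; [|apply continuity_2d_pt_const].
    apply continuity_2d_pt_minus.
    - apply continuity_2d_pt_mult; apply continuity_2d_pt_id1.
    - apply continuity_2d_pt_mult; [apply continuity_2d_pt_const|].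
      apply continuity_2d_pt_inv; [apply continuity_2d_pt_id2|auto]. }
  assert (Hc' : continuity_2d_pt (fun u v => rad xA u v) u v).
  { apply continuity_2d_pt_ext with (2 := Hc). intros; reflexivity. }
  assert (Hsq : continuity_2d_pt (fun u v => sqrt (rad xA u v)) u v).
  { apply (continuity_1d_2d_pt_comp sqrt (fun u v => rad xA u v)); auto.
    apply continuity_pt_sqrt. lra. }
  pose proof (sqrt_lt_R0 _ Hr).
  assert (Hd : continuity_2d_pt (fun u v => - u * / (rad xA u v * sqrt (rad xA u v))) u v).
  { apply continuity_2d_pt_mult.
    - apply continuity_2d_pt_opp. apply continuity_2d_pt_id1.
    - apply continuity_2d_pt_inv.
      + apply continuity_2d_pt_mult; auto.
      + apply Rgt_not_eq. apply Rmult_lt_0_compat; auto. }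
  apply continuity_2d_pt_ext with (2 := Hd). intros; unfold dkf, Rdiv. ring.
Qed.

Lemma dlt_mono xA u1 u2 : 0 < xA -> u1 * u1 <= u2 * u2 -> dlt xA u1 <= dlt xA u2.
Proof.
  intros H1 H2. unfold dlt. apply Rmin_glb; [apply Rmin_l|].
  apply Rle_trans with (1 := Rmin_r _ _).
  assert (0 <= xA * xA) by nra.
  unfold Rdiv. apply Rmult_le_compat_r; [lra|].
  replace (u1 * u1 * xA * xA) with ((u1 * u1) * (xA * xA)) by ring.
  replace (u2 * u2 * xA * xA) with ((u2 * u2) * (xA * xA)) by ring.
  apply Rmult_le_compat_r; lra.
Qed.

Lemma Ti_dl xA xB u0 : 0 < xB -> xB < xA -> u0 < 0 ->
  exists d, derivable_pt_lim (Ti xA xB) u0 d /\ 0 < d.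
Proof.
  intros HB HBA Hu0.
  assert (Hdl2 : 0 < dlt xA (u0 / 2)) by (apply dlt_pos; lra).
  set (dd := Rmin (- u0 / 2) (Rmin (xB / 2) (dlt xA (u0 / 2)))).
  assert (Hdd1 : dd <= - u0 / 2) by apply Rmin_l.
  assert (Hdd2 : dd <= xB / 2) by (apply Rle_trans with (1 := Rmin_r _ _); apply Rmin_l).
  assert (Hdd3 : dd <= dlt xA (u0 / 2)) by (apply Rle_trans with (1 := Rmin_r _ _); apply Rmin_r).
  assert (Hdd : 0 < dd) by (apply Rmin_pos; [lra|apply Rmin_pos; lra]).
  assert (Hnb : forall u v, Rabs (u - u0) < dd -> - xA - dd < v < - xB + dd ->
            0 < rad xA u v /\ v <> 0 /\ u <> 0).
  { intros u v Hu Hv. apply Rabs_def2 in Hu.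
    assert (Hu1 : u < u0 / 2) by lra.
    assert (Hm : dlt xA (u0 / 2) <= dlt xA u) by (apply dlt_mono; nra).
    split; [|split; lra]. apply rad_pos; lra. }
  assert (Hmin : Rmin (- xA) (- xB) = - xA) by (apply Rmin_left; lra).
  assert (Hmax : Rmax (- xA) (- xB) = - xB) by (apply Rmax_right; lra).
  assert (HD : is_derive (fun x0 => RInt (fun t => kf xA x0 t) (- xA) (- xB)) u0
             (RInt (fun t => Derive (fun u => kf xA u t) u0) (- xA) (- xB))).
  { apply (is_derive_RInt_param (fun u t => kf xA u t)).
    - apply locally_R with (e := dd); auto. intros y Hy t Ht.
      rewrite Hmin, Hmax in Ht.
      destruct (Hnb y t Hy ltac:(lra)) as [H1 [H2 H3]].
      exists (dkf xA y t). apply is_derive_Reals. apply kf_dlu; auto.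
    - intros t Ht. rewrite Hmin, Hmax in Ht.
      apply continuity_2d_pt_ext_loc with (f := dkf xA).
      + exists (mkposreal dd Hdd). intros u v Hu Hv. simpl in Hu, Hv.
        apply Rabs_def2 in Hv.
        destruct (Hnb u v Hu ltac:(lra)) as [H1 [H2 H3]].
        symmetry. apply is_derive_unique. apply is_derive_Reals. apply kf_dlu; auto.
      + destruct (Hnb u0 t ltac:(rewrite Rminus_eq_0, Rabs_R0; lra) ltac:(lra)) as [H1 [H2 H3]].
        apply dkf_cont2; auto.
    - apply locally_R with (e := dd); auto. intros y Hy.
      destruct (Hnb y (- xB) Hy ltac:(lra)) as [H1 [H2 H3]].
      assert (0 < dlt xA y) by (apply dlt_pos; lra).
      apply kf_exRInt; lra. }
  eexists. split.
  - apply is_derive_Reals. unfold Ti, Phi. exact HD.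
  - rewrite (RInt_ext _ (dkf xA u0)).
    + apply RInt_gt_0; [lra| |].
      * intros x Hx. destruct (Hnb u0 x ltac:(rewrite Rminus_eq_0, Rabs_R0; lra) ltac:(lra)) as [H1 [H2 H3]].
        pose proof (sqrt_lt_R0 _ H1). unfold dkf.
        apply Rdiv_lt_0_compat; [lra|]. apply Rmult_lt_0_compat; lra.
      * intros x Hx. destruct (Hnb u0 x ltac:(rewrite Rminus_eq_0, Rabs_R0; lra) ltac:(lra)) as [H1 [H2 H3]].
        apply (cont2d_slice (dkf xA) u0 x). apply dkf_cont2; auto.
    + intros x Hx. rewrite Hmin, Hmax in Hx.
      destruct (Hnb u0 x ltac:(rewrite Rminus_eq_0, Rabs_R0; lra) ltac:(lra)) as [H1 [H2 H3]].
      apply is_derive_unique. apply is_derive_Reals. apply kf_dlu; auto.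
Qed.

Lemma Ti_bound xA xB u : 0 < xB -> xB < xA -> u < 0 -> Ti xA xB u <= (xA - xB) / (- u).
Proof.
  intros HB HBA Hu.
  assert (Hdl : 0 < dlt xA u) by (apply dlt_pos; lra).
  unfold Ti, Phi.
  apply Rle_trans with (RInt (fun _ => / (- u)) (- xA) (- xB)).
  - apply RInt_le; [lra| apply kf_exRInt; lra | apply ex_RInt_const |].
    intros s Hs. unfold kf.
    assert (Hr : u * u <= rad xA u s).
    { unfold rad. assert (2 / xA <= - (2 / s)).
      { replace (- (2 / s)) with (2 / (- s)) by (field; lra).
        unfold Rdiv. apply Rmult_le_compat_l; [lra|]. apply Rinv_le_contravar; lra. }
      lra. }
    assert (Hsq : - u <= sqrt (rad xA u s)).
    { rewrite <- (sqrt_square (- u)) by lra. apply sqrt_le_1_alt. lra. }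
    apply Rinv_le_contravar; lra.
  - rewrite RInt_const. unfold scal; simpl. unfold mult; simpl. right. field. lra.
Qed.

Lemma cont_pos f m : continuity_pt f m -> 0 < f m ->
  exists eta, 0 < eta /\ forall x, Rabs (x - m) < eta -> 0 < f x.
Proof.
  intros Hc Hp. destruct (Hc (f m / 2) ltac:(lra)) as [alp [Halp H]].
  exists alp. split; auto. intros x Hx.
  destruct (Req_dec x m) as [->|Hne]; auto.
  assert (Hd := H x (conj (conj I (not_eq_sym Hne)) Hx)). simpl in Hd. unfold R_dist in Hd.
  apply Rabs_def2 in Hd. lra.
Qed.

Lemma cont_neg f m : continuity_pt f m -> f m < 0 ->
  exists eta, 0 < eta /\ forall x, Rabs (x - m) < eta -> f x < 0.
Proof.
  intros Hc Hp. destruct (cont_pos (fun x => - f x) m) as [eta [He H]].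
  - apply continuity_pt_opp. auto.
  - lra.
  - exists eta. split; auto. intros x Hx. specialize (H x Hx). lra.
Qed.

Lemma first_zero (f : R -> R) a b : a < b -> (forall t, a <= t <= b -> continuity_pt f t) ->
  0 < f a -> f b <= 0 ->
  exists c, a < c <= b /\ f c = 0 /\ forall s, a <= s < c -> 0 < f s.
Proof.
  intros Hab Hc Ha Hb.
  set (E := fun t => a <= t <= b /\ forall s, a <= s <= t -> 0 < f s).
  assert (HE : exists t, E t) by (exists a; split; [lra|intros s Hs; replace s with a by lra; auto]).
  assert (Hbd : bound E) by (exists b; intros t [Ht _]; lra).
  destruct (completeness E Hbd HE) as [m [Hub Hlub]].
  assert (Ham : a <= m) by (apply Hub; destruct HE as [t Ht]; unfold E; split; [lra|]; intros s Hs; replace s with a by lra; auto).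
  assert (Hmb : m <= b) by (apply Hlub; intros t [Ht _]; lra).
  assert (Hbelow : forall s, a <= s < m -> 0 < f s).
  { intros s Hs. destruct (Rlt_le_dec 0 (f s)) as [H|H]; auto. exfalso.
    assert (m <= s); [|lra]. apply Hlub. intros t [Ht Ht'].
    destruct (Rle_lt_dec t s) as [H1|H1]; auto. specialize (Ht' s ltac:(lra)). lra. }
  assert (Hm0 : f m = 0).
  { destruct (Rtotal_order (f m) 0) as [H|[H|H]]; auto; exfalso.
    - assert (Hma : a < m) by (destruct (Rle_lt_or_eq_dec _ _ Ham); auto; subst; lra).
      destruct (cont_neg f m (Hc m ltac:(lra)) H) as [eta [He Heta]].
      set (s := Rmax a (m - eta / 2)).
      assert (Hs1 : a <= s) by apply Rmax_l.
      assert (Hs2 : s < m) by (unfold s; apply Rmax_lub_lt; lra).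
      assert (Hs3 : m - eta / 2 <= s) by apply Rmax_r.
      specialize (Hbelow s ltac:(lra)). specialize (Heta s ltac:(apply Rabs_def1; lra)). lra.
    - assert (Hmb' : m < b) by (destruct (Rle_lt_or_eq_dec _ _ Hmb); auto; subst; lra).
      destruct (cont_pos f m (Hc m ltac:(lra)) H) as [eta [He Heta]].
      set (t := Rmin b (m + eta / 2)).
      assert (Ht1 : t <= b) by apply Rmin_l.
      assert (Ht2 : m < t) by (unfold t; apply Rmin_glb_lt; lra).
      assert (Ht3 : t <= m + eta / 2) by apply Rmin_r.
      assert (E t).
      { split; [lra|]. intros s Hs. destruct (Rlt_le_dec s m); [apply Hbelow; lra|].
        apply Heta. apply Rabs_def1; lra. }
      specialize (Hub t H0). lra. }
  exists m. split; [|split; auto].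
  split; auto. destruct (Rle_lt_or_eq_dec _ _ Ham); auto. subst. lra.
Qed.

Lemma deriv_pos_side f t l : derivable_pt_lim f t l -> 0 < l ->
  exists d, 0 < d /\ (forall h, 0 < h < d -> f t < f (t + h)) /\
    (forall h, - d < h < 0 -> f (t + h) < f t).
Proof.
  intros H Hl. destruct (H (l / 2) ltac:(lra)) as [d Hd].
  exists d. split; [apply cond_pos|]. split.
  - intros h Hh. assert (Hq := Hd h ltac:(lra) ltac:(rewrite Rabs_right; lra)).
    apply Rabs_def2 in Hq.
    assert (0 < (f (t + h) - f t) / h) by lra.
    assert (0 < (f (t + h) - f t) / h * h) by (apply Rmult_lt_0_compat; lra).
    replace ((f (t + h) - f t) / h * h) with (f (t + h) - f t) in H1 by (field; lra). lra.
  - intros h Hh. assert (Hq := Hd h ltac:(lra) ltac:(rewrite Rabs_left; lra)).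
    apply Rabs_def2 in Hq.
    assert (0 < (f (t + h) - f t) / h) by lra.
    assert (0 < (f (t + h) - f t) / h * (- h)) by (apply Rmult_lt_0_compat; lra).
    replace ((f (t + h) - f t) / h * (- h)) with (- (f (t + h) - f t)) in H1 by (field; lra). lra.
Qed.

Lemma deriv_zero_of_const f t l a b : a < b -> a <= t <= b ->
  (forall s, a <= s <= b -> f s = 0) -> derivable_pt_lim f t l -> l = 0.
Proof.
  intros Hab Ht Hz Hd.
  destruct (Rtotal_order l 0) as [H|[H|H]]; auto; exfalso.
  - assert (Hd' : derivable_pt_lim (fun s => - f s) t (- l)) by (apply (derivable_pt_lim_opp f); auto).
    destruct (deriv_pos_side _ _ _ Hd' ltac:(lra)) as [d [Hd0 [HH1 HH2]]].
    destruct (Rlt_le_dec t b).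
    + set (h := Rmin (d / 2) ((b - t) / 2)).
      assert (0 < h) by (apply Rmin_pos; lra).
      assert (h <= d / 2) by apply Rmin_l. assert (h <= (b - t) / 2) by apply Rmin_r.
      specialize (HH1 h ltac:(lra)). rewrite !Hz in HH1 by lra. lra.
    + set (h := Rmin (d / 2) ((t - a) / 2)).
      assert (0 < h) by (apply Rmin_pos; lra).
      assert (h <= d / 2) by apply Rmin_l. assert (h <= (t - a) / 2) by apply Rmin_r.
      specialize (HH2 (- h) ltac:(lra)). rewrite !Hz in HH2 by lra. lra.
  - destruct (deriv_pos_side _ _ _ Hd H) as [d [Hd0 [HH1 HH2]]].
    destruct (Rlt_le_dec t b).
    + set (h := Rmin (d / 2) ((b - t) / 2)).
      assert (0 < h) by (apply Rmin_pos; lra).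
      assert (h <= d / 2) by apply Rmin_l. assert (h <= (b - t) / 2) by apply Rmin_r.
      specialize (HH1 h ltac:(lra)). rewrite !Hz in HH1 by lra. lra.
    + set (h := Rmin (d / 2) ((t - a) / 2)).
      assert (0 < h) by (apply Rmin_pos; lra).
      assert (h <= d / 2) by apply Rmin_l. assert (h <= (t - a) / 2) by apply Rmin_r.
      specialize (HH2 (- h) ltac:(lra)). rewrite !Hz in HH2 by lra. lra.
Qed.

Lemma pos_case q1 q2 p2 tA tB : tA < tB ->
  (forall t, tA <= t <= tB -> derivable_pt_lim q2 t (p2 t)) ->
  (forall t, tA <= t <= tB -> q2 t = 0 -> 0 < q1 t * p2 t) ->
  q2 tA = 0 -> q2 tB = 0 -> 0 < q1 tA -> 0 < p2 tA ->
  exists t1, tA <= t1 <= tB /\ q2 t1 = 0 /\ q1 t1 < 0.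
Proof.
  intros Hab Hd HL HA HB Hq1 Hp.
  destruct (deriv_pos_side q2 tA (p2 tA) (Hd tA ltac:(lra)) Hp) as [d [Hd0 [H1 _]]].
  set (h := Rmin (d / 2) ((tB - tA) / 2)).
  assert (0 < h) by (apply Rmin_pos; lra).
  assert (h <= d / 2) by apply Rmin_l. assert (h <= (tB - tA) / 2) by apply Rmin_r.
  assert (Ht0 : 0 < q2 (tA + h)) by (specialize (H1 h ltac:(lra)); lra).
  destruct (first_zero q2 (tA + h) tB ltac:(lra)) as [c [Hc [Hc0 Hcb]]].
  - intros t Ht. exact (dl_cont _ _ _ (Hd t ltac:(lra))).
  - auto.
  - lra.
  - exists c. split; [lra|split; auto].
    specialize (HL c ltac:(lra) Hc0).
    destruct (Rle_lt_dec (p2 c) 0) as [Hp2|Hp2].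
    + destruct (Rle_lt_dec 0 (q1 c)); [|auto]. nra.
    + exfalso. destruct (deriv_pos_side q2 c (p2 c) (Hd c ltac:(lra)) Hp2) as [d' [Hd' [_ HH2]]].
      set (k := Rmin (d' / 2) ((c - (tA + h)) / 2)).
      assert (0 < k) by (apply Rmin_pos; lra).
      assert (k <= d' / 2) by apply Rmin_l. assert (k <= (c - (tA + h)) / 2) by apply Rmin_r.
      specialize (HH2 (- k) ltac:(lra)). specialize (Hcb (c + - k) ltac:(lra)). lra.
Qed.

Lemma norm2_00 : norm2 0 0 = 0.
Proof. unfold norm2. replace (0 ^ 2 + 0 ^ 2) with 0 by ring. apply sqrt_0. Qed.

Lemma norm2_x0 a : 0 < a -> norm2 a 0 = a.
Proof. intro. unfold norm2. replace (a ^ 2 + 0 ^ 2) with (a * a) by ring. apply sqrt_square; lra. Qed.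

Lemma hull_neg q1 q2 tA tB xA t1 : q1 tA = xA -> q2 tA = 0 -> 0 < xA -> tA <= t1 <= tB ->
  q2 t1 = 0 -> q1 t1 < 0 -> in_conv_hull (arc_image q1 q2 tA tB) 0 0.
Proof.
  intros H1 H2 Hx Ht H3 H4. set (b := q1 t1).
  exists 1%nat, (fun i => match i with O => xA | _ => b end), (fun _ => 0),
    (fun i => match i with O => - b / (xA - b) | _ => xA / (xA - b) end).
  split; [|split; [|split]].
  - intros i Hi. destruct i as [|[|i]]; [| |lia].
    + split. exists tA. split; [lra|split; auto].
      unfold Rdiv; apply Rmult_le_pos; [unfold b; lra|left; apply Rinv_0_lt_compat; unfold b; lra].
    + split. exists t1. split; [lra|split; auto].
      unfold Rdiv; apply Rmult_le_pos; [unfold b; lra|left; apply Rinv_0_lt_compat; unfold b; lra].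
  - simpl. field. unfold b; lra.
  - simpl. field. unfold b; lra.
  - simpl. ring.
Qed.

Lemma sum_wc (w c : nat -> R) : forall n, (forall i, (i <= n)%nat -> 0 <= w i /\ 0 < c i) ->
  0 <= sum_f_R0 (fun i => w i * c i) n /\
  (sum_f_R0 (fun i => w i * c i) n <= 0 -> sum_f_R0 w n = 0).
Proof.
  induction n as [|n IH]; intros H.
  - simpl. destruct (H 0%nat ltac:(lia)) as [H1 H2]. split; [nra|]. intros. nra.
  - simpl. destruct (H (S n) ltac:(lia)) as [H1 H2].
    destruct IH as [IH1 IH2]; [intros i Hi; apply H; lia|].
    assert (0 <= w (S n) * c (S n)) by nra.
    split; [lra|]. intros Hs. rewrite IH2 by lra.
    assert (w (S n) * c (S n) = 0) by lra.
    assert (w (S n) = 0) by nra. lra.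
Qed.

Lemma hull_pos_ok x tA tB : (forall t, tA <= t <= tB -> 0 < x t) ->
  ~ in_conv_hull (arc_image x (fun _ => 0) tA tB) 0 0.
Proof.
  intros Hx [n [c1 [c2 [w [Hi [Hw [Hs1 Hs2]]]]]]].
  assert (Hc : forall i, (i <= n)%nat -> 0 <= w i /\ 0 < c1 i).
  { intros i Hle. destruct (Hi i Hle) as [[t [Ht [Ht1 Ht2]]] Hwi]. split; auto.
    rewrite <- Ht1. apply Hx; auto. }
  destruct (sum_wc w c1 n Hc) as [_ H]. rewrite H in Hw by lra. lra.
Qed.

Lemma planar q1 q2 p1 p2 tA tB xA xB : 0 < xB -> xB < xA ->
  direct_arc q1 q2 p1 p2 tA tB xA 0 xB 0 ->
  tA < tB /\ forall t, tA <= t <= tB -> q2 t = 0 /\ p2 t = 0 /\ 0 < q1 t.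
Proof.
  intros HB HBA [[Hab Hk] [H1A [H2A [H1B [H2B Hh]]]]].
  assert (Hlt : tA < tB).
  { destruct (Rle_lt_or_eq_dec _ _ Hab) as [H|H]; auto. subst. lra. }
  split; [auto|].
  assert (HL : forall t, tA <= t <= tB -> q1 t * p2 t - q2 t * p1 t = xA * p2 tA).
  { intros t Ht.
    replace (xA * p2 tA) with (q1 tA * p2 tA - q2 tA * p1 tA) by (rewrite H1A, H2A; ring).
    apply (mvt_const (fun t => q1 t * p2 t - q2 t * p1 t) tA t); [lra|].
    intros s Hs. destruct (Hk s ltac:(lra)) as [_ [Hd1 [Hd2 [Hd3 Hd4]]]].
    eapply dl_eq.
    - apply (dl_minus' (fun t => q1 t * p2 t) (fun t => q2 t * p1 t));
        apply dl_mult'; eauto.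
    - unfold Rdiv. ring. }
  destruct (Rtotal_order (p2 tA) 0) as [Hn|[H0|Hp]].
  - exfalso. apply Hh.
    destruct (pos_case q1 (fun t => - q2 t) (fun t => - p2 t) tA tB Hlt) as [t1 [Ht1 [Hz Hq]]].
    + intros t Ht. apply (derivable_pt_lim_opp q2). apply (Hk t Ht).
    + intros t Ht Hz. specialize (HL t Ht). assert (Hq20 : q2 t = 0) by lra.
      rewrite Hq20 in HL. assert (0 < xA * - p2 tA) by (apply Rmult_lt_0_compat; lra). nra.
    + rewrite H2A; ring.
    + rewrite H2B; ring.
    + lra.
    + lra.
    + apply (hull_neg q1 q2 tA tB xA t1); auto; lra.
  - assert (Hratio : forall t, tA <= t <= tB -> (forall s, tA <= s <= t -> 0 < q1 s) -> q2 t = 0).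
    { intros t Ht Hpos.
      assert (Hr : q2 t * / q1 t = q2 tA * / q1 tA).
      { apply (mvt_const (fun t => q2 t * / q1 t) tA t); [lra|].
        intros s Hs. destruct (Hk s ltac:(lra)) as [_ [Hd1 [Hd2 [Hd3 Hd4]]]].
        specialize (Hpos s Hs). specialize (HL s ltac:(lra)). rewrite H0 in HL.
        eapply dl_eq.
        - apply (dl_mult' q2 (fun t => / q1 t)); [eauto|]. apply dl_inv'; eauto. lra.
        - field_simplify_eq; [|lra]. lra. }
      rewrite H2A in Hr. specialize (Hpos t ltac:(lra)).
      assert (q2 t * / q1 t * q1 t = 0) by (rewrite Hr; ring).
      replace (q2 t * / q1 t * q1 t) with (q2 t) in H by (field; lra). auto. }
    assert (Hq1 : forall t, tA <= t <= tB -> 0 < q1 t).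
    { intros t Ht. destruct (Rlt_le_dec 0 (q1 t)) as [H|H]; auto. exfalso.
      assert (Htt : tA < t) by (destruct (Rle_lt_or_eq_dec _ _ (proj1 Ht)); auto; subst; lra).
      destruct (first_zero q1 tA t Htt) as [c [Hc [Hc0 Hcb]]].
      - intros s Hs. exact (dl_cont _ _ _ (proj1 (proj2 (Hk s ltac:(lra))))).
      - lra.
      - auto.
      - assert (Hz : forall s, tA <= s < c -> q2 s = 0).
        { intros s Hs. apply Hratio; [lra|]. intros s' Hs'. apply Hcb; lra. }
        assert (Hcont2 : continuity_pt q2 c) by exact (dl_cont _ _ _ (proj1 (proj2 (proj2 (Hk c ltac:(lra)))))).
        assert (Hq2c : q2 c = 0).
        { destruct (Rtotal_order (q2 c) 0) as [Hn'|[He|Hp']]; auto; exfalso.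
          - destruct (cont_neg q2 c Hcont2 Hn') as [eta [He Heta]].
            set (s := Rmax tA (c - eta / 2)).
            assert (tA <= s) by apply Rmax_l. assert (s < c) by (unfold s; apply Rmax_lub_lt; lra).
            assert (c - eta / 2 <= s) by apply Rmax_r.
            specialize (Heta s ltac:(apply Rabs_def1; lra)). rewrite Hz in Heta by lra. lra.
          - destruct (cont_pos q2 c Hcont2 Hp') as [eta [He Heta]].
            set (s := Rmax tA (c - eta / 2)).
            assert (tA <= s) by apply Rmax_l. assert (s < c) by (unfold s; apply Rmax_lub_lt; lra).
            assert (c - eta / 2 <= s) by apply Rmax_r.
            specialize (Heta s ltac:(apply Rabs_def1; lra)). rewrite Hz in Heta by lra. lra. }
        destruct (Hk c ltac:(lra)) as [Hn _]. rewrite Hc0, Hq2c, norm2_00 in Hn. auto. }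
    assert (Hq2 : forall t, tA <= t <= tB -> q2 t = 0).
    { intros t Ht. apply Hratio; auto. intros s Hs. apply Hq1; lra. }
    intros t Ht. split; [auto|split; [|auto]].
    apply (deriv_zero_of_const q2 t (p2 t) tA tB Hlt Ht Hq2).
    apply (Hk t Ht).
  - exfalso. apply Hh.
    destruct (pos_case q1 q2 p2 tA tB Hlt) as [t1 [Ht1 [Hz Hq]]].
    + intros t Ht. apply (Hk t Ht).
    + intros t Ht Hz. specialize (HL t Ht). rewrite Hz in HL.
      assert (0 < xA * p2 tA) by (apply Rmult_lt_0_compat; lra). nra.
    + auto.
    + auto.
    + lra.
    + auto.
    + apply (hull_neg q1 q2 tA tB xA t1); auto; lra.
Qed.

Definition Tf xA xB u := if Rlt_dec u 0 then Ti xA xB u else Te xA xB u.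

Lemma time_gen xA xB x v tA tB : 0 < xB -> xB < xA -> rsol x v tA tB -> tA <= tB ->
  x tA = xA -> x tB = xB -> tB - tA = Tf xA xB (v tA).
Proof.
  intros HB HBA Hs Hab HxA HxB. unfold Tf. destruct (Rlt_dec (v tA) 0) as [H|H].
  - apply (time_in x v tA tB xA xB); auto.
  - apply (time_ell x v tA tB xA xB); auto.
    destruct (rsol_main x v tA tB xA xB HB HBA Hs Hab HxA HxB) as [_ [Hv _]].
    apply lt_vE_sq; lra.
Qed.

Lemma construct xA xB tA u : 0 < xB -> xB < xA -> u < vE xA ->
  exists x v, 0 < Tf xA xB u /\ rsol x v tA (tA + Tf xA xB u) /\ x tA = xA /\ v tA = u /\
    x (tA + Tf xA xB u) = xB.
Proof.
  intros HB HBA Hu.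
  assert (Hc : exists x v T, 0 < T /\ rsol x v tA (tA + T) /\ x tA = xA /\ v tA = u /\ x (tA + T) = xB).
  { destruct (Rlt_le_dec u 0).
    - apply construct_in; auto.
    - apply construct_ell; auto. apply lt_vE_sq; lra. }
  destruct Hc as [x [v [T [HT [Hs [H1 [H2 H3]]]]]]].
  pose proof (time_gen xA xB x v tA (tA + T) HB HBA Hs ltac:(lra) H1 H3) as Ht.
  rewrite H2 in Ht. replace (tA + T - tA) with T in Ht by ring. subst T.
  exists x, v. auto.
Qed.

Lemma rsol_direct x v tA tB xA xB : rsol x v tA tB -> tA <= tB -> x tA = xA -> x tB = xB ->
  direct_arc x (fun _ => 0) v (fun _ => 0) tA tB xA 0 xB 0.
Proof.
  intros Hs Hab HxA HxB. split; [|split; [auto|split; [auto|split; [auto|split; [auto|]]]]].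
  - split; auto. intros t Ht. destruct (Hs t Ht) as [Hx [Hdx Hdv]].
    rewrite norm2_x0 by auto. split; [lra|split; [auto|split; [|split]]].
    + apply dl_const'.
    + eapply dl_eq; [exact Hdv|]. field. lra.
    + eapply dl_eq; [apply dl_const'|]. unfold Rdiv. ring.
  - apply hull_pos_ok. intros t Ht. apply (Hs t Ht).
Qed.

Lemma Ti_Te xA xB u : 0 < xB -> xB < xA -> - vE xA < u < 0 -> Ti xA xB u = Te xA xB u.
Proof.
  intros HB HBA Hu.
  destruct (construct_in 0 xA xB u HB HBA ltac:(lra)) as [x [v [T [HT [Hs [H1 [H2 H3]]]]]]].
  pose proof (time_in x v 0 (0 + T) xA xB HB HBA Hs ltac:(lra) H1 H3) as E1.
  pose proof (time_ell x v 0 (0 + T) xA xB HB HBA Hs ltac:(lra) H1 H3) as E2.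
  rewrite H2 in E1, E2.
  assert (u * u < 2 / xA).
  { rewrite <- vE_sq by lra. pose proof (vE_pos xA ltac:(lra)). nra. }
  specialize (E2 H). lra.
Qed.

Lemma Tf_dl xA xB u : 0 < xB -> xB < xA -> u < vE xA ->
  exists d, derivable_pt_lim (Tf xA xB) u d /\ 0 < d.
Proof.
  intros HB HBA Hu. pose proof (vE_pos xA ltac:(lra)) as Hve.
  destruct (Rlt_le_dec u 0) as [Hn|Hp].
  - destruct (Ti_dl xA xB u HB HBA Hn) as [d [Hd Hd0]]. exists d. split; auto.
    apply (dl_ext_loc (Ti xA xB) _ _ _ (- u)); [lra| |auto].
    intros y Hy. apply Rabs_def2 in Hy. unfold Tf. destruct (Rlt_dec y 0); [auto|lra].
  - assert (Huu : u * u < 2 / xA) by (apply lt_vE_sq; lra).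
    exists (Dte xA xB u). split; [|apply Dte_pos; auto].
    apply (dl_ext_loc (Te xA xB) _ _ _ (Rmin (u + vE xA) (vE xA - u))).
    + apply Rmin_pos; lra.
    + intros y Hy. apply Rabs_def2 in Hy.
      assert (Rmin (u + vE xA) (vE xA - u) <= u + vE xA) by apply Rmin_l.
      assert (Rmin (u + vE xA) (vE xA - u) <= vE xA - u) by apply Rmin_r.
      unfold Tf. destruct (Rlt_dec y 0); [|auto].
      symmetry. apply Ti_Te; auto. lra.
    + apply Te_dl; auto.
Qed.

Theorem proposition2 (xA xB : R) (HB : 0 < xB) (HBA : xB < xA) :
  exists T : R -> R,
    (forall tA vA, vA < vE xA ->
       0 < T vA /\
       exists x v : R -> R,
         direct_arc x (fun _ => 0) v (fun _ => 0)
                    tA (tA + T vA) xA 0 xB 0 /\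
         v tA = vA /\
         (forall t, tA <= t < tA + T vA -> x t <> xB) /\
         (0 <= vA -> exists tc, tA <= tc <= tA + T vA /\ v tc = 0)) /\
    (forall (q1 q2 p1 p2 : R -> R) (tA tB : R),
       direct_arc q1 q2 p1 p2 tA tB xA 0 xB 0 ->
       (forall t, tA <= t <= tB -> q2 t = 0 /\ p2 t = 0) /\
       p1 tA < vE xA /\
       tB - tA = T (p1 tA)) /\
    (forall u w, u < w -> w < vE xA -> T u < T w) /\
    (forall vA, vA < vE xA ->
       exists d, derivable_pt_lim T vA d /\ 0 < d) /\
    (forall eps, 0 < eps -> exists N, forall vA, vA < N -> T vA < eps) /\
    (forall M, exists delta, 0 < delta /\
       forall vA, vE xA - delta < vA < vE xA -> M < T vA).
Proof.
  pose proof (vE_pos xA ltac:(lra)) as Hve.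
  exists (Tf xA xB). split; [|split; [|split; [|split; [|split]]]].
  -
    intros tA u Hu.
    destruct (construct xA xB tA u HB HBA Hu) as [x [v [HT [Hs [H1 [H2 H3]]]]]].
    split; auto. exists x, v. split; [apply rsol_direct; auto; lra|split; [auto|split]].
    + intros t Ht Hxt.
      pose proof (time_gen xA xB x v tA t HB HBA (rsol_sub x v _ _ tA t Hs ltac:(lra) ltac:(lra))
                    ltac:(lra) H1 Hxt) as E. rewrite H2 in E. lra.
    + intros Hu0. destruct (Rle_lt_or_eq_dec _ _ Hu0) as [Hp|He].
      * destruct (rsol_main x v tA (tA + Tf xA xB u) xA xB HB HBA Hs ltac:(lra) H1 H3)
          as [_ [_ [HvB _]]].
        destruct (IVT_interv (fun t => - v t) tA (tA + Tf xA xB u)) as [z [Hz Hz']].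
        -- intros a Ha. apply continuity_pt_opp.
           apply (dl_cont _ _ _ (proj2 (proj2 (Hs a ltac:(lra))))).
        -- lra.
        -- lra.
        -- lra.
        -- exists z. split; auto. lra.
      * exists tA. split; [lra|]. lra.
  -
    intros q1 q2 p1 p2 tA tB Hd.
    destruct (planar q1 q2 p1 p2 tA tB xA xB HB HBA Hd) as [Hlt Hq].
    destruct Hd as [[Hab Hk] [H1A [H2A [H1B [H2B Hh]]]]].
    assert (Hs : rsol q1 p1 tA tB).
    { intros t Ht. destruct (Hq t Ht) as [Hq2 [Hp2 Hq1]].
      destruct (Hk t Ht) as [_ [Hd1 [_ [Hd3 _]]]].
      rewrite Hq2, norm2_x0 in Hd3 by auto.
      split; [auto|split; [auto|]]. eapply dl_eq; [exact Hd3|]. field. lra. }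
    split; [intros t Ht; destruct (Hq t Ht) as [? [? ?]]; auto|].
    split.
    + apply (rsol_main q1 p1 tA tB xA xB HB HBA Hs Hab H1A H1B).
    + apply (time_gen xA xB q1 p1 tA tB HB HBA Hs Hab H1A H1B).
  -
    intros u w Huw Hw.
    assert (Hex : forall t, exists d, t < vE xA -> derivable_pt_lim (Tf xA xB) t d /\ 0 < d).
    { intro t. destruct (Rlt_le_dec t (vE xA)) as [H|H].
      - destruct (Tf_dl xA xB t HB HBA H) as [d Hd]. exists d. auto.
      - exists 0. intro; lra. }
    set (D := fun t => proj1_sig (constructive_indefinite_description _ (Hex t))).
    assert (HD : forall t, t < vE xA -> derivable_pt_lim (Tf xA xB) t (D t) /\ 0 < D t).
    { intros t Ht. unfold D. destruct (constructive_indefinite_description _ (Hex t)). simpl. auto. }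
    apply (mvt_incr (Tf xA xB) D u w); try lra.
    + intros t Ht. apply HD. lra.
    + intros t Ht. apply HD. lra.
  -
    intros u Hu. apply Tf_dl; auto.
  -
    intros eps Heps.
    exists (Rmin (-1) (- ((xA - xB) / eps))). intros u Hu.
    assert (Hu1 : u < -1) by (apply Rlt_le_trans with (1 := Hu); apply Rmin_l).
    assert (Hu2 : u < - ((xA - xB) / eps)) by (apply Rlt_le_trans with (1 := Hu); apply Rmin_r).
    unfold Tf. destruct (Rlt_dec u 0) as [Hn|Hn]; [|lra].
    apply Rle_lt_trans with (1 := Ti_bound xA xB u HB HBA Hn).
    assert (Hq : (xA - xB) / eps < - u) by lra.
    apply Rmult_lt_compat_r with (r := eps) in Hq; [|lra].
    replace ((xA - xB) / eps * eps) with (xA - xB) in Hq by (field; lra).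
    apply (Rmult_lt_reg_r (- u)); [lra|].
    replace ((xA - xB) / - u * - u) with (xA - xB) by (field; lra). lra.
  -
    intros M. set (K := Rabs M + 1).
    assert (HK : 0 < K) by (unfold K; pose proof (Rabs_pos M); lra).
    assert (HKM : M < K) by (unfold K; pose proof (Rle_abs M); lra).
    exists (Rmin (vE xA / 2) (xA / (4 * K))). split.
    + apply Rmin_pos; [lra|]. apply Rdiv_lt_0_compat; lra.
    + intros u Hu.
      assert (Hd1 : Rmin (vE xA / 2) (xA / (4 * K)) <= vE xA / 2) by apply Rmin_l.
      assert (Hd2 : Rmin (vE xA / 2) (xA / (4 * K)) <= xA / (4 * K)) by apply Rmin_r.
      assert (Hu0 : vE xA / 2 < u) by lra.
      assert (Huu : u * u < 2 / xA) by (apply lt_vE_sq; lra).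
      unfold Tf. destruct (Rlt_dec u 0) as [Hn|Hn]; [lra|].
      apply Rlt_le_trans with (2 := Te_ge xA xB HB HBA u ltac:(lra) Huu). cbv beta.
      set (e := vE xA - u).
      assert (He : 0 < e) by (unfold e; lra).
      assert (HeK : K * e < xA / 4).
      { assert (e < xA / (4 * K)) by (unfold e; lra).
        apply Rmult_lt_compat_l with (r := K) in H; [|lra].
        replace (K * (xA / (4 * K))) with (xA / 4) in H by (field; lra). lra. }
      assert (Hq : 2 / xA - u * u = e * (vE xA + u)).
      { rewrite <- vE_sq by lra. unfold e. ring. }
      unfold aof. rewrite Hq.
      assert (Hpos : 0 < e * (vE xA + u)) by (apply Rmult_lt_0_compat; lra).
      assert (Hmain : K * (e * (vE xA + u)) < xA * u).
      { assert (vE xA + u <= 4 * u) by lra.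
        assert (K * e * (vE xA + u) <= K * e * (4 * u)) by (apply Rmult_le_compat_l; nra).
        assert (K * e * (4 * u) < xA / 4 * (4 * u)) by (apply Rmult_lt_compat_r; lra).
        nra. }
      apply Rlt_trans with K; auto.
      apply (Rmult_lt_reg_r (e * (vE xA + u))); auto.
      replace (/ (e * (vE xA + u)) * xA * u * (e * (vE xA + u))) with (xA * u) by (field; lra).
      lra.
Qed.
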